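(* Let $B$ be any group, $\sigma=(1,2)$, and let $w=(r_1,\ r_1^{-1}[f,g])\in B\wr C_2$ with $r_1,f,g\in B$. Put $a_{2,1}=(f^{-1})^{r_1^{-1}}$, $a_{2,2}=r_1a_{2,1}$, $a_{1,2}=g^{a_{2,2}^{-1}}$. Then $$w=\big[(e,a_{1,2})\sigma,\ (a_{2,1},a_{2,2})\big].$$
   Context: $B\wr C_2=B^2\rtimes C_2$, elements written $(g_1,g_2)\pi$ with multiplication $(g_1,g_2)\pi\cdot(h_1,h_2)\tau=(g_1h_{\pi(1)},g_2h_{\pi(2)})\pi\tau$. Conventions: $[a,b]=aba^{-1}b^{-1}$, $a^b=bab^{-1}$. *)

(* Defs.v *)
Set Implicit Arguments.

Section Grp.
Variables (B : Type) (mul : B -> B -> B) (inv : B -> B) (e : B).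

Record is_group : Prop := {
  mulA : forall x y z, mul x (mul y z) = mul (mul x y) z;
  mul1g : forall x, mul e x = x;
  mulg1 : forall x, mul x e = x;
  mulVg : forall x, mul (inv x) x = e;
  mulgV : forall x, mul x (inv x) = e
}.

(* Conventions: [a,b] = a b a^-1 b^-1 and a^b = b a b^-1. *)
Definition gcomm (a b : B) : B := mul (mul (mul a b) (inv a)) (inv b).
Definition gconj (a b : B) : B := mul (mul b a) (inv b).

(* Elements (g1, g2) pi of B wr C_2 = B^2 x| C_2; the permutation pi of {1,2}
   is encoded as a bool: false = identity, true = sigma = (1,2). *)
Record wr := Wr { wr1 : B; wr2 : B; wrp : bool }.

Definition wr_at1 (pi : bool) (h1 h2 : B) : B := if pi then h2 else h1.
Definition wr_at2 (pi : bool) (h1 h2 : B) : B := if pi then h1 else h2.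

(* (g1,g2)pi * (h1,h2)tau = (g1 h_{pi(1)}, g2 h_{pi(2)}) pi tau *)
Definition wr_mul (x y : wr) : wr :=
  Wr (mul (wr1 x) (wr_at1 (wrp x) (wr1 y) (wr2 y)))
     (mul (wr2 x) (wr_at2 (wrp x) (wr1 y) (wr2 y)))
     (xorb (wrp x) (wrp y)).

Definition wr_inv (x : wr) : wr :=
  Wr (inv (wr_at1 (wrp x) (wr1 x) (wr2 x)))
     (inv (wr_at2 (wrp x) (wr1 x) (wr2 x)))
     (wrp x).

Definition wr_comm (x y : wr) : wr :=
  wr_mul (wr_mul (wr_mul x y) (wr_inv x)) (wr_inv y).

End Grp.

(* Main.v *)
Require Import Defs.
Set Implicit Arguments.

Section L.
Variables (B : Type) (mul : B -> B -> B) (inv : B -> B) (e : B).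
Hypothesis HB : is_group mul inv e.

Lemma invK x : inv (inv x) = x.
Proof.
  rewrite <- (mulg1 HB (inv (inv x))), <- (mulVg HB x), (mulA HB), (mulVg HB), (mul1g HB). reflexivity.
Qed.

Lemma inv_uniq a b : mul a b = e -> inv a = b.
Proof.
  intro H. rewrite <- (mulg1 HB (inv a)), <- H, (mulA HB), (mulVg HB), (mul1g HB). reflexivity.
Qed.

Lemma invM x y : inv (mul x y) = mul (inv y) (inv x).
Proof.
  apply inv_uniq.
  rewrite <- (mulA HB), (mulA HB y), (mulgV HB), (mul1g HB), (mulgV HB). reflexivity.
Qed.

Lemma inv1 : inv e = e.
Proof. rewrite <- (mul1g HB (inv e)). apply (mulgV HB). Qed.

Lemma canl x y : mul x (mul (inv x) y) = y.
Proof. rewrite (mulA HB), (mulgV HB), (mul1g HB). reflexivity. Qed.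
Lemma canr x y : mul (inv x) (mul x y) = y.
Proof. rewrite (mulA HB), (mulVg HB), (mul1g HB). reflexivity. Qed.
End L.

Theorem corollary1 (B : Type) (mul : B -> B -> B) (inv : B -> B) (e : B)
  (HB : is_group mul inv e) (r1 f g : B) :
  let a21 := gconj mul inv (inv f) (inv r1) in
  let a22 := mul r1 a21 in
  let a12 := gconj mul inv g (inv a22) in
  Wr r1 (mul (inv r1) (gcomm mul inv f g)) false
  = wr_comm mul inv (Wr e a12 true) (Wr a21 a22 false).
Proof.
  intros a21 a22 a12. subst a21 a22 a12.
  unfold wr_comm, wr_mul, wr_inv, gconj, gcomm, wr_at1, wr_at2; simpl.
  repeat rewrite (invM HB). repeat rewrite (invK HB). repeat rewrite (inv1 HB).
  repeat rewrite (mulg1 HB). repeat rewrite (mul1g HB).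
  repeat rewrite <- (mulA HB).
  repeat rewrite (canl HB). repeat rewrite (canr HB).
  repeat rewrite (mulgV HB). repeat rewrite (mulg1 HB).
  repeat rewrite (canl HB). repeat rewrite (canr HB).
  reflexivity.
Qed.
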